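(* Let $\mathcal O$ be a phylogenetic quiver and let $A$ be a regular vertex of $\mathcal O$. Then the clade $\mathcal O_A$ is a phylogenetic quiver.
   Context: A quiver consists of a class of vertices and, for each ordered pair of vertices $(A,B)$, a set of edges $A\to B$ (loops and multiple edges allowed). An evolution of length $m\ge 0$ is a sequence $A_0\leftarrow A_1\leftarrow\cdots\leftarrow A_m$ of vertices together with edges $A_k\to A_{k-1}$ ($1\le k\le m$); $A_0$ is its initial and $A_m$ its terminal vertex. Write $A\le B$ ($A$ is an ancestor of $B$, $B$ a descendant of $A$) if there is an evolution with initial vertex $A$ and terminal vertex $B$; $A,B$ are isotypic ($A\sim B$) if $A\le B$ and $B\le A$. A vertex $A$ is primitive if every ancestor of $A$ is isotypic to $A$. A full evolution for $X$ is an evolution with primitive initial vertex and terminal vertex $X$. The height $h(X)$ is the smallest length of a full evolution for $X$ ($h(X)=\infty$ if none exists). An evolution $\alpha=(A_0\leftarrow\cdots\leftarrow A_m)$ embeds in $\beta=(B_0\leftarrow\cdots\leftarrow B_n)$ if $m\le n$ and there are integers $0\le r_0<r_1<\cdots<r_m\le n$ with $A_k\sim B_{r_k}$ for all $k$. A universal evolution for $X$ is a full evolution for $X$ that embeds in every full evolution for $X$; $X$ is phylogenetic if it has a universal evolution. A quiver is monotonous if $h(A)\ge h(B)$ for every edge $A\to B$; it is small if the isotypy classes of its vertices form a set; it is phylogenetic if it is small, monotonous, and all its vertices are phylogenetic. The clade $\mathcal O_A$ of a vertex $A$ is the quiver formed by all descendants of $A$ in $\mathcal O$ and all edges of $\mathcal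 O$ between them; heights, primitivity etc. in $\mathcal O_A$ are computed within $\mathcal O_A$. A vertex $A$ is regular if for every $B$ in $\mathcal O_A$ with $h(B)=h(A)$ there is an edge $B\to A$ in $\mathcal O$. *)

(* Defs.v *)
From Stdlib Require Import Arith.

Record Quiver := {
  qV : Type;
  qE : qV -> qV -> Type
}.

(* An evolution A_0 <- A_1 <- ... <- A_m : a length m, the vertices
   ev_v 0, ..., ev_v m (values beyond m are irrelevant), and edges
   A_k -> A_{k-1} for 1 <= k <= m. *)
Record evolution (Q : Quiver) := {
  ev_len : nat;
  ev_v : nat -> qV Q;
  ev_e : forall k, 1 <= k <= ev_len -> qE Q (ev_v k) (ev_v (k - 1))
}.
Arguments ev_len {Q} _.
Arguments ev_v {Q} _ _.

Definition initial {Q} (a : evolution Q) : qV Q := ev_v a 0.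
Definition terminal {Q} (a : evolution Q) : qV Q := ev_v a (ev_len a).

Definition ancestor (Q : Quiver) (A B : qV Q) : Prop :=
  exists a : evolution Q, initial a = A /\ terminal a = B.

Definition isotypic (Q : Quiver) (A B : qV Q) : Prop :=
  ancestor Q A B /\ ancestor Q B A.

Definition primitive (Q : Quiver) (A : qV Q) : Prop :=
  forall B, ancestor Q B A -> isotypic Q B A.

Definition full_evolution (Q : Quiver) (X : qV Q) (a : evolution Q) : Prop :=
  primitive Q (initial a) /\ terminal a = X.

(* has_height Q X h : h(X) = h, where None stands for infinity. *)
Definition has_height (Q : Quiver) (X : qV Q) (h : option nat) : Prop :=
  match h with
  | Some n =>
      (exists a, full_evolution Q X a /\ ev_len a = n) /\
      (forall a, full_evolution Q X a -> n <= ev_len a)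
  | None => forall a, ~ full_evolution Q X a
  end.

Definition le_ext (x y : option nat) : Prop :=
  match x, y with
  | _, None => True
  | None, Some _ => False
  | Some m, Some n => m <= n
  end.

Definition embeds (Q : Quiver) (a b : evolution Q) : Prop :=
  ev_len a <= ev_len b /\
  exists r : nat -> nat,
    (forall k, k < ev_len a -> r k < r (S k)) /\
    r (ev_len a) <= ev_len b /\
    (forall k, k <= ev_len a -> isotypic Q (ev_v a k) (ev_v b (r k))).

Definition universal_evolution (Q : Quiver) (X : qV Q) (a : evolution Q) : Prop :=
  full_evolution Q X a /\ forall b, full_evolution Q X b -> embeds Q a b.

Definition phylogenetic_vertex (Q : Quiver) (X : qV Q) : Prop :=
  exists a, universal_evolution Q X a.

Definition monotonous (Q : Quiver) : Prop :=
  forall A B : qV Q, qE Q A B ->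
    forall hA hB, has_height Q A hA -> has_height Q B hB -> le_ext hB hA.

(* small: the isotypy classes form a set; "set" = indexed by a type in Set. *)
Definition small (Q : Quiver) : Prop :=
  exists (I : Set) (f : I -> qV Q), forall v, exists i, isotypic Q (f i) v.

Definition phylogenetic (Q : Quiver) : Prop :=
  small Q /\ monotonous Q /\ forall X, phylogenetic_vertex Q X.

Definition clade (Q : Quiver) (A : qV Q) : Quiver := {|
  qV := { B : qV Q | ancestor Q A B };
  qE := fun x y => qE Q (proj1_sig x) (proj1_sig y)
|}.

Definition regular (Q : Quiver) (A : qV Q) : Prop :=
  forall B, ancestor Q A B ->
    forall h, has_height Q B h -> has_height Q A h -> inhabited (qE Q B A).

(* Main.v *)
Require Import Defs.
From Stdlib Require Import Arith Lia Classical ProofIrrelevance ClassicalEpsilon.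

Lemma ev0_ex (Q : Quiver) (x : qV Q) :
  exists a : evolution Q, ev_len a = 0 /\ forall k, ev_v a k = x.
Proof.
  assert (E : forall k, 1 <= k <= 0 -> qE Q ((fun _ => x) k) ((fun _ => x) (k - 1))).
  { intros k Hk. exfalso; lia. }
  exists (Build_evolution Q 0 (fun _ => x) E). simpl. auto.
Qed.

Lemma concat_ex (Q : Quiver) (a b : evolution Q) : terminal a = initial b ->
  exists c : evolution Q, ev_len c = ev_len a + ev_len b /\
    (forall k, k <= ev_len a -> ev_v c k = ev_v a k) /\
    (forall k, ev_v c (ev_len a + k) = ev_v b k).
Proof.
  intro H. unfold terminal, initial in H.
  set (v := fun k => if k <=? ev_len a then ev_v a k else ev_v b (k - ev_len a)).
  assert (E : forall k, 1 <= k <= ev_len a + ev_len b -> qE Q (v k) (v (k-1))).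
  { intros k Hk. unfold v.
    destruct (k <=? ev_len a) eqn:E1.
    - apply Nat.leb_le in E1.
      assert (E2 : (k - 1 <=? ev_len a) = true) by (apply Nat.leb_le; lia).
      rewrite E2. apply (ev_e _ a). lia.
    - apply Nat.leb_gt in E1.
      destruct (k - 1 <=? ev_len a) eqn:E2.
      + apply Nat.leb_le in E2. assert (k = S (ev_len a)) by lia. subst k.
        replace (S (ev_len a) - 1) with (ev_len a) by lia. rewrite H.
        replace (S (ev_len a) - ev_len a) with 1 by lia.
        exact (ev_e _ b 1 ltac:(lia)).
      + apply Nat.leb_gt in E2.
        replace (k - 1 - ev_len a) with (k - ev_len a - 1) by lia.
        apply (ev_e _ b). lia. }
  exists (Build_evolution Q _ v E). simpl. split; [reflexivity|split].
  - intros k Hk. unfold v. apply Nat.leb_le in Hk. rewrite Hk. reflexivity.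
  - intros k. unfold v. destruct (ev_len a + k <=? ev_len a) eqn:E1.
    + apply Nat.leb_le in E1. assert (k = 0) by lia. subst k.
      rewrite Nat.add_0_r. exact H.
    + f_equal. lia.
Qed.

Lemma drop_ex (Q : Quiver) (a : evolution Q) j : j <= ev_len a ->
  exists c : evolution Q, ev_len c = ev_len a - j /\ forall k, ev_v c k = ev_v a (j + k).
Proof.
  intros Hj.
  assert (E : forall k, 1 <= k <= ev_len a - j ->
     qE Q ((fun k => ev_v a (j + k)) k) ((fun k => ev_v a (j + k)) (k - 1))).
  { intros k Hk. simpl. replace (j + (k-1)) with (j + k - 1) by lia. apply (ev_e _ a). lia. }
  exists (Build_evolution Q (ev_len a - j) (fun k => ev_v a (j+k)) E). simpl; auto.
Qed.

Lemma take_ex (Q : Quiver) (a : evolution Q) j : j <= ev_len a ->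
  exists c : evolution Q, ev_len c = j /\ forall k, ev_v c k = ev_v a k.
Proof.
  intros Hj.
  assert (E : forall k, 1 <= k <= j -> qE Q (ev_v a k) (ev_v a (k - 1))).
  { intros k Hk. apply (ev_e _ a). lia. }
  exists (Build_evolution Q j (ev_v a) E). simpl; auto.
Qed.

Lemma edge_ex (Q : Quiver) x y (e : qE Q y x) :
  exists a : evolution Q, ev_len a = 1 /\ ev_v a 0 = x /\ ev_v a 1 = y.
Proof.
  set (v := fun k => match k with 0 => x | _ => y end).
  assert (E : forall k, 1 <= k <= 1 -> qE Q (v k) (v (k - 1))).
  { intros k Hk. destruct k as [|[|k]]; try (exfalso; lia). exact e. }
  exists (Build_evolution Q 1 v E). simpl; auto.
Qed.

Lemma anc_refl (Q : Quiver) x : ancestor Q x x.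
Proof. destruct (ev0_ex Q x) as [a [H1 H2]]. exists a. unfold initial, terminal. auto. Qed.

Lemma anc_trans (Q : Quiver) x y z : ancestor Q x y -> ancestor Q y z -> ancestor Q x z.
Proof.
  intros [a [Ha1 Ha2]] [b [Hb1 Hb2]].
  destruct (concat_ex Q a b) as [c [Hc1 [Hc2 Hc3]]]; [congruence|].
  exists c. unfold initial, terminal in *. split.
  - rewrite Hc2 by lia. auto.
  - rewrite Hc1, Hc3. auto.
Qed.

Lemma anc_within (Q : Quiver) (a : evolution Q) i j : i <= j -> j <= ev_len a ->
  ancestor Q (ev_v a i) (ev_v a j).
Proof.
  intros Hij Hj.
  destruct (take_ex Q a j Hj) as [b [Hb1 Hb2]].
  destruct (drop_ex Q b i ltac:(lia)) as [c [Hc1 Hc2]].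
  exists c. unfold initial, terminal. rewrite Hc1, !Hc2, !Hb2. split; f_equal; lia.
Qed.

Lemma anc_edge (Q : Quiver) x y : qE Q y x -> ancestor Q x y.
Proof. intro e. destruct (edge_ex Q x y e) as [a [H1 [H2 H3]]]. exists a.
  unfold initial, terminal. rewrite H1. auto. Qed.

Lemma iso_refl (Q : Quiver) x : isotypic Q x x.
Proof. split; apply anc_refl. Qed.
Lemma iso_sym (Q : Quiver) x y : isotypic Q x y -> isotypic Q y x.
Proof. intros [H1 H2]; split; auto. Qed.
Lemma iso_trans (Q : Quiver) x y z : isotypic Q x y -> isotypic Q y z -> isotypic Q x z.
Proof. intros [H1 H2] [H3 H4]; split; eapply anc_trans; eauto. Qed.

Lemma sig_eq (Q : Quiver) (A : qV Q) (x y : qV (clade Q A)) :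
  proj1_sig x = proj1_sig y -> x = y.
Proof. destruct x as [x px], y as [y py]. simpl. intro E. subst y. f_equal. apply proof_irrelevance. Qed.

Lemma lift_ex (Q : Quiver) (A : qV Q) (a : evolution Q) : ancestor Q A (ev_v a 0) ->
  exists c : evolution (clade Q A), ev_len c = ev_len a /\
    forall k, k <= ev_len a -> proj1_sig (ev_v c k) = ev_v a k.
Proof.
  intro HA.
  set (v := fun k => exist (fun B => ancestor Q A B) (ev_v a (Nat.min k (ev_len a)))
     (anc_trans _ _ _ _ HA (anc_within _ a 0 _ (Nat.le_0_l _) (Nat.le_min_r _ _)))).
  assert (E : forall k, 1 <= k <= ev_len a -> qE (clade Q A) (v k) (v (k - 1))).
  { intros k Hk.
    change (qE Q (ev_v a (Nat.min k (ev_len a))) (ev_v a (Nat.min (k-1) (ev_len a)))).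
    rewrite (Nat.min_l k (ev_len a)) by lia.
    rewrite (Nat.min_l (k-1) (ev_len a)) by lia.
    apply (ev_e _ a). lia. }
  exists (Build_evolution (clade Q A) (ev_len a) v E). simpl. split; auto.
  intros k Hk. rewrite Nat.min_l by lia. reflexivity.
Qed.

Lemma proj_ex (Q : Quiver) (A : qV Q) (c : evolution (clade Q A)) :
  exists a : evolution Q, ev_len a = ev_len c /\
    forall k, ev_v a k = proj1_sig (ev_v c k).
Proof.
  assert (E : forall k, 1 <= k <= ev_len c ->
     qE Q ((fun k => proj1_sig (ev_v c k)) k) ((fun k => proj1_sig (ev_v c k)) (k - 1))).
  { intros k Hk. exact (ev_e _ c k Hk). }
  exists (Build_evolution Q (ev_len c) _ E). simpl; auto.
Qed.

Lemma ancC_iff (Q : Quiver) (A : qV Q) (x y : qV (clade Q A)) :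
  ancestor (clade Q A) x y <-> ancestor Q (proj1_sig x) (proj1_sig y).
Proof.
  split.
  - intros [c [H1 H2]]. destruct (proj_ex Q A c) as [a [Ha1 Ha2]].
    exists a. unfold initial, terminal in *. rewrite Ha1, !Ha2, H1, H2. auto.
  - intros [a [H1 H2]]. unfold initial, terminal in *.
    destruct (lift_ex Q A a) as [c [Hc1 Hc2]].
    { rewrite H1. exact (proj2_sig x). }
    exists c. unfold initial, terminal. split; apply sig_eq.
    + rewrite Hc2 by lia. auto.
    + rewrite Hc1, Hc2 by lia. auto.
Qed.

Lemma isoC_iff (Q : Quiver) (A : qV Q) (x y : qV (clade Q A)) :
  isotypic (clade Q A) x y <-> isotypic Q (proj1_sig x) (proj1_sig y).
Proof. unfold isotypic. rewrite !ancC_iff. tauto. Qed.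

Lemma primC_iff (Q : Quiver) (A : qV Q) (x : qV (clade Q A)) :
  primitive (clade Q A) x <-> isotypic Q (proj1_sig x) A.
Proof.
  split.
  - intro H. set (a := exist (fun B => ancestor Q A B) A (anc_refl Q A) : qV (clade Q A)).
    assert (Hx : ancestor (clade Q A) a x). { apply ancC_iff. exact (proj2_sig x). }
    apply H in Hx. apply isoC_iff in Hx. apply iso_sym. exact Hx.
  - intros H B HB. apply isoC_iff. apply ancC_iff in HB. split; auto.
    eapply anc_trans. apply H. exact (proj2_sig B).
Qed.

Lemma height_unique (Q : Quiver) X h1 h2 :
  has_height Q X h1 -> has_height Q X h2 -> h1 = h2.
Proof.
  destruct h1 as [n1|], h2 as [n2|]; simpl.
  - intros [[a1 [F1 L1]] M1] [[a2 [F2 L2]] M2].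
    apply M1 in F2. apply M2 in F1. f_equal. lia.
  - intros [[a1 [F1 L1]] M1] H. exfalso. eapply H; eauto.
  - intros H [[a1 [F1 L1]] M1]. exfalso. eapply H; eauto.
  - auto.
Qed.

Lemma univ_height (Q : Quiver) X u :
  universal_evolution Q X u -> has_height Q X (Some (ev_len u)).
Proof.
  intros [F U]. split.
  - exists u. auto.
  - intros a Fa. apply U in Fa. apply Fa.
Qed.

Lemma min_ex (P : nat -> Prop) : (exists n, P n) -> exists n, P n /\ forall m, P m -> n <= m.
Proof.
  intros [n Hn]. revert Hn. induction n as [n IH] using lt_wf_ind. intro Hn.
  destruct (classic (exists m, m < n /\ P m)) as [[m [Hm1 Hm2]]|Hno].
  - exact (IH m Hm1 Hm2).
  - exists n. split; auto. intros m Hm. destruct (le_lt_dec n m); auto.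
    exfalso; apply Hno; eauto.
Qed.

Lemma height_exists (Q : Quiver) X : (exists a, full_evolution Q X a) ->
  exists n, has_height Q X (Some n).
Proof.
  intros [a Ha].
  destruct (min_ex (fun n => exists a, full_evolution Q X a /\ ev_len a = n)) as [n [Hn M]].
  { eauto. }
  exists n. split; auto. intros b Hb. apply M. eauto.
Qed.

Lemma emb_ge (r : nat -> nat) la : (forall k, k < la -> r k < r (S k)) ->
  forall k, k <= la -> k <= r k.
Proof. intros H k. induction k; intros Hk; [lia|]. specialize (H k ltac:(lia)). specialize (IHk ltac:(lia)). lia. Qed.

Lemma emb_gap (r : nat -> nat) la : (forall k, k < la -> r k < r (S k)) ->
  forall d k, k + d <= la -> r k + d <= r (k + d).
Proof. intros H d. induction d; intros k Hk. rewrite !Nat.add_0_r; lia.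
  specialize (IHd k ltac:(lia)). specialize (H (k + d) ltac:(lia)).
  replace (k + S d) with (S (k + d)) by lia. lia. Qed.

Lemma full_concat (Q : Quiver) (p e : evolution Q) :
  primitive Q (initial p) -> terminal p = initial e ->
  exists b, full_evolution Q (terminal e) b /\ ev_len b = ev_len p + ev_len e /\
    (forall k, k <= ev_len p -> ev_v b k = ev_v p k) /\
    (forall k, ev_v b (ev_len p + k) = ev_v e k).
Proof.
  intros Hp Ht. destruct (concat_ex Q p e Ht) as [c [C1 [C2 C3]]].
  exists c. split; auto. split.
  - unfold initial in *. rewrite C2 by lia. auto.
  - unfold terminal. rewrite C1, C3. auto.
Qed.

Lemma h_min (Q : Quiver) (h : qV Q -> nat) (Hh : forall X, has_height Q X (Some (h X))) X a :
  full_evolution Q X a -> h X <= ev_len a.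
Proof. intro F. apply (proj2 (Hh X)). auto. Qed.

Lemma h_ex (Q : Quiver) (h : qV Q -> nat) (Hh : forall X, has_height Q X (Some (h X))) X :
  exists a, full_evolution Q X a /\ ev_len a = h X.
Proof. apply (proj1 (Hh X)). Qed.

Lemma h_mono (Q : Quiver) (h : qV Q -> nat) (Hh : forall X, has_height Q X (Some (h X))) :
  monotonous Q -> forall x y, ancestor Q x y -> h x <= h y.
Proof.
  intros M x y [a [H1 H2]]. unfold initial, terminal in *. subst x y.
  assert (forall k, k <= ev_len a -> h (ev_v a 0) <= h (ev_v a k)); [|auto].
  induction k; intros Hk; [lia|].
  pose proof (ev_e _ a (S k) ltac:(lia)) as e.
  replace (S k - 1) with k in e by lia.
  pose proof (M _ _ e _ _ (Hh _) (Hh _)). simpl in H. specialize (IHk ltac:(lia)). lia.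
Qed.

Lemma h_iso (Q : Quiver) (h : qV Q -> nat) (Hh : forall X, has_height Q X (Some (h X))) :
  monotonous Q -> forall x y, isotypic Q x y -> h x = h y.
Proof. intros M x y [H1 H2]. apply (h_mono Q h Hh M) in H1, H2. lia. Qed.

Lemma h_prefix (Q : Quiver) (h : qV Q -> nat) (Hh : forall X, has_height Q X (Some (h X))) X a :
  full_evolution Q X a -> forall k, k <= ev_len a -> h (ev_v a k) <= k.
Proof.
  intros [P T] k Hk. destruct (take_ex Q a k Hk) as [b [B1 B2]].
  rewrite <- B1. apply (h_min Q h Hh). split.
  - unfold initial in *. rewrite B2. auto.
  - unfold terminal. rewrite B2, B1. auto.
Qed.

Lemma h_exact (Q : Quiver) (h : qV Q -> nat) (Hh : forall X, has_height Q X (Some (h X))) X a :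
  full_evolution Q X a -> ev_len a = h X -> forall k, k <= ev_len a -> h (ev_v a k) = k.
Proof.
  intros F L k Hk. pose proof (h_prefix Q h Hh X a F k Hk).
  destruct (h_ex Q h Hh (ev_v a k)) as [p [[Pp Tp] Lp]].
  destruct (drop_ex Q a k Hk) as [d [D1 D2]].
  destruct (full_concat Q p d Pp) as [b [Fb [Lb _]]].
  { unfold initial. rewrite D2, Nat.add_0_r. auto. }
  assert (terminal d = X).
  { unfold terminal. rewrite D2, D1. destruct F as [_ T]. unfold terminal in T.
    rewrite <- T. f_equal. lia. }
  rewrite H0 in Fb. apply (h_min Q h Hh) in Fb. lia.
Qed.

Lemma univ_len (Q : Quiver) (h : qV Q -> nat) (Hh : forall X, has_height Q X (Some (h X))) X u :
  universal_evolution Q X u -> ev_len u = h X.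
Proof. intro U. apply univ_height in U. pose proof (height_unique _ _ _ _ U (Hh X)). congruence. Qed.

Lemma setup (Q : Quiver) (A : qV Q) (h : qV Q -> nat)
  (Hh : forall X, has_height Q X (Some (h X))) (M : monotonous Q) (Hreg : regular Q A)
  X u : ancestor Q A X -> universal_evolution Q X u ->
  h A <= ev_len u /\ ancestor Q A (ev_v u (h A)) /\ h (ev_v u (h A)) = h A /\
  inhabited (qE Q (ev_v u (h A)) A).
Proof.
  intros HAX U. pose proof (univ_len Q h Hh X u U) as Lu.
  pose proof (h_mono Q h Hh M A X HAX) as HnX.
  destruct (h_ex Q h Hh A) as [pA [[PpA TpA] LpA]].
  destruct HAX as [e [Ie Te]].
  destruct (full_concat Q pA e PpA) as [b [Fb [Lb [B1 B2]]]]; [congruence|].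
  rewrite Te in Fb.
  destruct U as [Fu Uu]. destruct (Uu b Fb) as [Le [r [R1 [R2 R3]]]].
  pose proof (emb_ge r _ R1 (h A) ltac:(lia)) as G1.
  pose proof (emb_gap r _ R1 (ev_len u - h A) (h A) ltac:(lia)) as G2.
  replace (h A + (ev_len u - h A)) with (ev_len u) in G2 by lia.
  assert (Hb : ev_v b (r (h A)) = ev_v e (r (h A) - h A)).
  { rewrite <- B2. f_equal. lia. }
  assert (HA1 : ancestor Q A (ev_v e (r (h A) - h A))).
  { rewrite <- Ie at 1. unfold initial. apply anc_within; lia. }
  assert (Hiso := R3 (h A) ltac:(lia)). rewrite Hb in Hiso.
  assert (HA2 : ancestor Q A (ev_v u (h A))).
  { eapply anc_trans; [exact HA1|]. apply Hiso. }
  assert (HH : h (ev_v u (h A)) = h A).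
  { apply (h_exact Q h Hh X u Fu Lu). lia. }
  split; [lia|]. split; [auto|]. split; [auto|].
  apply (Hreg _ HA2 (Some (h A))); [rewrite <- HH at 2|]; apply Hh.
Qed.

Lemma C_full_to_Q (Q : Quiver) (A : qV Q) (h : qV Q -> nat)
  (Hh : forall X, has_height Q X (Some (h X))) (M : monotonous Q)
  (X : qV (clade Q A)) (c : evolution (clade Q A)) :
  full_evolution (clade Q A) X c ->
  exists b, full_evolution Q (proj1_sig X) b /\ ev_len b = h A + ev_len c /\
    (forall j, ev_v b (h A + j) = proj1_sig (ev_v c j)) /\ isotypic Q (ev_v b (h A)) A.
Proof.
  intros [Pc Tc]. apply primC_iff in Pc.
  destruct (proj_ex Q A c) as [a [La Va]].
  destruct (h_ex Q h Hh (proj1_sig (initial c))) as [p [[Pp Tp] Lp]].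
  rewrite (h_iso Q h Hh M _ _ Pc) in Lp.
  destruct (full_concat Q p a Pp) as [b [Fb [Lb [B1 B2]]]].
  { rewrite Tp. unfold initial. rewrite Va. reflexivity. }
  assert (terminal a = proj1_sig X).
  { unfold terminal. rewrite Va, La. rewrite <- Tc. reflexivity. }
  rewrite H in Fb. exists b. rewrite Lp in B2. split; [auto|split; [lia|split]].
  - intro j. rewrite B2, Va. reflexivity.
  - rewrite <- (Nat.add_0_r (h A)), B2, Va. exact Pc.
Qed.

Lemma K1 (Q : Quiver) (A : qV Q) (h : qV Q -> nat)
  (Hh : forall X, has_height Q X (Some (h X))) (M : monotonous Q) (Hreg : regular Q A)
  (X : qV (clade Q A)) u : universal_evolution Q (proj1_sig X) u ->
  isotypic Q (ev_v u (h A)) A ->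
  exists s, universal_evolution (clade Q A) X s /\ ev_len s = h (proj1_sig X) - h A.
Proof.
  intros U Hiso.
  destruct (setup Q A h Hh M Hreg (proj1_sig X) u (proj2_sig X) U) as [S1 [S2 [S3 S4]]].
  pose proof (univ_len Q h Hh _ u U) as Lu.
  destruct (drop_ex Q u (h A) S1) as [d [D1 D2]].
  destruct (lift_ex Q A d) as [s [Ls Vs]].
  { rewrite D2, Nat.add_0_r. exact S2. }
  exists s. split; [|lia].
  assert (Fs : full_evolution (clade Q A) X s).
  { split.
    - apply primC_iff. unfold initial. rewrite Vs by lia. rewrite D2, Nat.add_0_r. exact Hiso.
    - apply sig_eq. unfold terminal. rewrite Vs by lia. rewrite D2, Ls, D1.
      destruct U as [[_ Tu] _]. unfold terminal in Tu. rewrite <- Tu. f_equal. lia. }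
  split; [exact Fs|].
  intros c Fc.
  destruct (C_full_to_Q Q A h Hh M X c Fc) as [b [Fb [Lb [Vb Ib]]]].
  destruct U as [Fu Uu]. destruct (Uu b Fb) as [Le [r [R1 [R2 R3]]]].
  set (n := h A) in *. set (m := ev_len u) in *.
  assert (G : forall k, k <= m -> k <= r k) by (apply (emb_ge r m R1)).
  set (r2 := fun k => r (n + k) - n).
  assert (R21 : forall k, k < ev_len s -> r2 k < r2 (S k)).
  { intros k Hk. unfold r2. rewrite Ls, D1 in Hk.
    pose proof (R1 (n + k) ltac:(lia)). pose proof (G (n+k) ltac:(lia)).
    replace (n + S k) with (S (n + k)) by lia. lia. }
  assert (R22 : r2 (ev_len s) <= ev_len c).
  { unfold r2. rewrite Ls, D1. replace (n + (m - n)) with m by lia. lia. }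
  pose proof (emb_ge r2 _ R21 (ev_len s) (le_n _)).
  split; [lia|]. exists r2. split; [exact R21|]. split; [exact R22|].
  intros k Hk. apply isoC_iff. rewrite Vs by lia. rewrite D2.
  rewrite <- Vb. unfold r2. rewrite Ls, D1 in Hk.
  replace (n + (r (n + k) - n)) with (r (n + k)) by (pose proof (G (n+k) ltac:(lia)); lia).
  apply R3. lia.
Qed.

Lemma K2 (Q : Quiver) (A : qV Q) (h : qV Q -> nat)
  (Hh : forall X, has_height Q X (Some (h X))) (M : monotonous Q) (Hreg : regular Q A)
  (X : qV (clade Q A)) u : universal_evolution Q (proj1_sig X) u ->
  ~ isotypic Q (ev_v u (h A)) A ->
  exists s, universal_evolution (clade Q A) X s /\ ev_len s = h (proj1_sig X) - h A + 1.
Proof.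
  intros U Hiso.
  destruct (setup Q A h Hh M Hreg (proj1_sig X) u (proj2_sig X) U) as [S1 [S2 [S3 [e]]]].
  pose proof (univ_len Q h Hh _ u U) as Lu.
  destruct (drop_ex Q u (h A) S1) as [d [D1 D2]].
  destruct (edge_ex Q A _ e) as [ed [E1 [E2 E3]]].
  destruct (concat_ex Q ed d) as [c0 [C1 [C2 C3]]].
  { unfold terminal, initial. rewrite E1, E3, D2, Nat.add_0_r. reflexivity. }
  rewrite E1 in C1, C2, C3.
  destruct (lift_ex Q A c0) as [s [Ls Vs]].
  { rewrite C2, E2 by lia. apply anc_refl. }
  exists s. split; [|lia].
  assert (Fs : full_evolution (clade Q A) X s).
  { split.
    - apply primC_iff. unfold initial. rewrite Vs by lia. rewrite C2, E2 by lia. apply iso_refl.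
    - apply sig_eq. unfold terminal. rewrite Vs by lia. rewrite Ls, C1, C3, D2, D1.
      destruct U as [[_ Tu] _]. unfold terminal in Tu. rewrite <- Tu. f_equal. lia. }
  split; [exact Fs|].
  intros c Fc.
  destruct (C_full_to_Q Q A h Hh M X c Fc) as [b [Fb [Lb [Vb Ib]]]].
  destruct U as [Fu Uu]. destruct (Uu b Fb) as [Le [r [R1 [R2 R3]]]].
  set (n := h A) in *. set (m := ev_len u) in *.
  assert (G : forall k, k <= m -> k <= r k) by (apply (emb_ge r m R1)).
  assert (Hrn : r n <> n).
  { intro E. apply Hiso. eapply iso_trans; [apply R3; lia|]. rewrite E. exact Ib. }
  pose proof (G n ltac:(lia)) as Gn.
  set (r2 := fun k => match k with 0 => 0 | S k' => r (n + k') - n end).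
  assert (R21 : forall k, k < ev_len s -> r2 k < r2 (S k)).
  { intros k Hk. rewrite Ls, C1, D1 in Hk. destruct k as [|k]; simpl.
    - rewrite Nat.add_0_r. lia.
    - pose proof (R1 (n + k) ltac:(lia)). pose proof (G (n+k) ltac:(lia)).
      replace (n + S k) with (S (n + k)) by lia. lia. }
  assert (R22 : r2 (ev_len s) <= ev_len c).
  { rewrite Ls, C1, D1. simpl. replace (n + (m - n)) with m by lia. lia. }
  pose proof (emb_ge r2 _ R21 (ev_len s) (le_n _)).
  split; [lia|]. exists r2. split; [exact R21|]. split; [exact R22|].
  intros k Hk. apply isoC_iff. rewrite Vs by lia. rewrite Ls, C1, D1 in Hk.
  destruct k as [|k]; simpl.
  - rewrite C2, E2 by lia. rewrite <- Vb, Nat.add_0_r. apply iso_sym. exact Ib.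
  - replace (S k) with (1 + k) by lia. rewrite C3, D2, <- Vb.
    replace (n + (r (n + k) - n)) with (r (n + k)) by (pose proof (G (n+k) ltac:(lia)); lia).
    apply R3. lia.
Qed.

Lemma contra_lemma (Q : Quiver) (A : qV Q) (h : qV Q -> nat)
  (Hh : forall X, has_height Q X (Some (h X))) (M : monotonous Q)
  x y (e : qE Q x y) ux uy :
  universal_evolution Q x ux -> universal_evolution Q y uy ->
  h x = h y -> h A <= h y -> ancestor Q A y ->
  isotypic Q (ev_v ux (h A)) A -> ~ isotypic Q (ev_v uy (h A)) A -> False.
Proof.
  intros Ux Uy Hxy HAy AAy Ix Iy.
  pose proof (univ_len Q h Hh _ ux Ux) as Lx.
  pose proof (univ_len Q h Hh _ uy Uy) as Ly.
  destruct Uy as [[Py Ty] _].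
  destruct (edge_ex Q y x e) as [ed [E1 [E2 E3]]].
  destruct (full_concat Q uy ed Py) as [w [Fw [Lw [W1 W2]]]].
  { unfold initial. rewrite E2. exact Ty. }
  assert (Tx : terminal ed = x) by (unfold terminal; rewrite E1; exact E3).
  rewrite Tx in Fw.
  destruct Ux as [Fx Ux]. destruct (Ux w Fw) as [Le [r [R1 [R2 R3]]]].
  set (n := h A) in *. set (m := h y) in *.
  pose proof (emb_ge r _ R1 n ltac:(lia)) as G1.
  pose proof (emb_gap r _ R1 (ev_len ux - n) n ltac:(lia)) as G2.
  replace (n + (ev_len ux - n)) with (ev_len ux) in G2 by lia.
  assert (r n = n \/ r n = S n) as [Hr|Hr] by lia.
  - apply Iy. eapply iso_trans; [|exact Ix]. apply iso_sym.
    pose proof (R3 n ltac:(lia)) as I. rewrite Hr, W1 in I by lia. exact I.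
  - destruct (le_lt_dec (S n) m) as [Hn|Hn].
    + pose proof (R3 n ltac:(lia)) as I. rewrite Hr, W1 in I by lia.
      apply (h_iso Q h Hh M) in I.
      rewrite (h_exact Q h Hh x ux Fx Lx n ltac:(lia)) in I.
      rewrite (h_exact Q h Hh y uy (conj Py Ty) Ly (S n) ltac:(lia)) in I. lia.
    + assert (n = m) by lia.
      pose proof (R3 n ltac:(lia)) as I. rewrite Hr in I.
      replace (S n) with (ev_len uy + 1) in I by lia. rewrite W2, E3 in I.
      apply Iy. unfold terminal in Ty.
      replace (ev_v uy n) with y by (rewrite <- Ty; f_equal; lia).
      split; [|exact AAy].
      eapply anc_trans; [apply anc_edge; exact e|].
      eapply anc_trans; [apply I|]. apply Ix.
Qed.

Theorem theorem9p4 (Q : Quiver) (A : qV Q) :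
  phylogenetic Q -> regular Q A -> phylogenetic (clade Q A).
Proof.
  intros [Hsmall [M Hphy]] Hreg.
  assert (Hhe : forall X, exists n, has_height Q X (Some n)).
  { intro X. apply height_exists. destruct (Hphy X) as [u [F _]]. eauto. }
  pose (h := fun X => proj1_sig (constructive_indefinite_description _ (Hhe X))).
  assert (Hh : forall X, has_height Q X (Some (h X))).
  { intro X. exact (proj2_sig (constructive_indefinite_description _ (Hhe X))). }
  clearbody h.
  assert (HC : forall (X : qV (clade Q A)) u, universal_evolution Q (proj1_sig X) u ->
     forall hX, has_height (clade Q A) X hX ->
     (isotypic Q (ev_v u (h A)) A -> hX = Some (h (proj1_sig X) - h A)) /\
     (~ isotypic Q (ev_v u (h A)) A -> hX = Some (h (proj1_sig X) - h A + 1))).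
  { intros X u U hX HX. split; intro I.
    - destruct (K1 Q A h Hh M Hreg X u U I) as [s [Us Ls]].
      rewrite <- Ls. eapply height_unique; [exact HX|]. apply univ_height; auto.
    - destruct (K2 Q A h Hh M Hreg X u U I) as [s [Us Ls]].
      rewrite <- Ls. eapply height_unique; [exact HX|]. apply univ_height; auto. }
  split; [|split].
  - destruct Hsmall as [I [f Hf]].
    exists {i : I | ancestor Q A (f i)}.
    exists (fun i => exist (fun B => ancestor Q A B) (f (proj1_sig i)) (proj2_sig i)).
    intro v. destruct (Hf (proj1_sig v)) as [i Hi].
    assert (H : ancestor Q A (f i)).
    { eapply anc_trans; [exact (proj2_sig v)|]. apply Hi. }
    exists (exist _ i H). apply isoC_iff. simpl. exact Hi.
  - intros x y e hx hy Hx Hy.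
    destruct (Hphy (proj1_sig x)) as [ux Ux].
    destruct (Hphy (proj1_sig y)) as [uy Uy].
    pose proof (h_mono Q h Hh M _ _ (anc_edge Q _ _ e)) as Hyx.
    pose proof (h_mono Q h Hh M _ _ (proj2_sig y)) as HAy.
    destruct (HC x ux Ux hx Hx) as [Cx1 Cx2].
    destruct (HC y uy Uy hy Hy) as [Cy1 Cy2].
    destruct (classic (isotypic Q (ev_v ux (h A)) A)) as [Ix|Ix];
    destruct (classic (isotypic Q (ev_v uy (h A)) A)) as [Iy|Iy].
    + rewrite (Cx1 Ix), (Cy1 Iy). simpl. lia.
    + rewrite (Cx1 Ix), (Cy2 Iy). simpl.
      destruct (Nat.eq_dec (h (proj1_sig x)) (h (proj1_sig y))) as [E|E]; [|lia].
      exfalso. eapply (contra_lemma Q A h Hh M _ _ e ux uy Ux Uy E HAy (proj2_sig y) Ix Iy).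
    + rewrite (Cx2 Ix), (Cy1 Iy). simpl. lia.
    + rewrite (Cx2 Ix), (Cy2 Iy). simpl. lia.
  - intro X. destruct (Hphy (proj1_sig X)) as [u U].
    destruct (classic (isotypic Q (ev_v u (h A)) A)) as [I|I].
    + destruct (K1 Q A h Hh M Hreg X u U I) as [s [Us _]]. exists s; exact Us.
    + destruct (K2 Q A h Hh M Hreg X u U I) as [s [Us _]]. exists s; exact Us.
Qed.
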